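(* Let $m\ge1$, $N=2^m$, let $\mathcal{A}\subsetneq[0,N-1]$ (so that $\mathcal{A}^c=[0,N-1]\setminus\mathcal{A}$ is nonempty), and let $\mathbf{P}\in\mathbb{F}_2^{N\times N}$ be upper triangular with unit diagonal. Then $\mathcal{C}_{\boldsymbol{G}_N}([\max(\mathcal{A}^c)+1,N-1])$ is a decreasing monomial code of dimension $N-1-\max(\mathcal{A}^c)$ and $\mathcal{C}_{\boldsymbol{G}_N}([\max(\mathcal{A}^c)+1,N-1])\subset\mathcal{C}_{\mathbf{P}\boldsymbol{G}_N}(\mathcal{A})$.
   Context: $[\ell,u]=\{\ell,\dots,u\}$. $\boldsymbol{G}_N=\begin{pmatrix}1&0\\1&1\end{pmatrix}^{\otimes m}$ over $\mathbb{F}_2$, rows/columns indexed by $0,\dots,N-1$; $\mathcal{C}_{\mathbf{B}}(\mathcal{S})$ is the code spanned by the rows of $\mathbf{B}$ indexed by $\mathcal{S}$. For $i\in[0,N-1]$ write $\mathrm{bin}(i)=(i_0,\dots,i_{m-1})\in\mathbb{F}_2^m$ with $i=\sum_j i_j2^j$, and $\mathbf{x}^{b}=\prod_j x_j^{b_j}$ for $b\in\mathbb{F}_2^m$. Row $i$ of $\boldsymbol{G}_N$ equals the evaluation vector $\mathrm{ev}(\mathbf{x}^{\mathrm{bin}(N-1-i)})$, where $\mathrm{ev}(Q)$ lists the values of $Q\in\mathbb{F}_2[x_0,\dots,x_{m-1}]/(x_j^2-x_j)$ at the points of $\mathbb{F}_2^m$, column $k$ corresponding to the point $\mathrm{bin}(N-1-k)$.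 Thus $\mathcal{C}_{\boldsymbol{G}_N}(\mathcal{S})$ is the monomial code spanned by $\{\mathrm{ev}(f):f\in\mathcal{I}\}$ with $\mathcal{I}=\{\mathbf{x}^{\mathrm{bin}(N-1-i)}:i\in\mathcal{S}\}$. Order on monomials: $f\preceq_w g$ iff $f\mid g$; for $f=x_{i_1}\cdots x_{i_s}$, $g=x_{j_1}\cdots x_{j_s}$ of the same degree with $i_1<\dots<i_s$, $j_1<\dots<j_s$, $f\preceq_{sh}g$ iff $i_\ell\le j_\ell$ for all $\ell$; $f\preceq g$ iff there is a monomial $g^*$ with $f\preceq_{sh}g^*\preceq_w g$. A monomial set $\mathcal{I}$ is decreasing if $f\in\mathcal{I}$ and $g\preceq f$ imply $g\in\mathcal{I}$; a decreasing monomial code is a monomial code with decreasing monomial set. *)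

(* Defs.v *)
From HB Require Import structures.
From mathcomp Require Import all_boot all_order all_algebra.
Set Implicit Arguments. Unset Strict Implicit. Unset Printing Implicit Defensive.
Import GRing.Theory.
Local Open Scope ring_scope.

Lemma two_pow_double (m : nat) : (2 ^ m + 2 ^ m)%N = (2 ^ m.+1)%N.
Proof. by rewrite addnn -mul2n expnS. Qed.

(* G_N = [[1,0],[1,1]]^{(x) m} over F_2, built recursively:
   G_{2^(m+1)} = [[1,0],[1,1]] (x) G_{2^m} = [[G,0],[G,G]]. *)
Fixpoint GN (m : nat) : 'M['F_2]_(2 ^ m) :=
  match m return 'M['F_2]_(2 ^ m) with
  | 0 => 1%:M
  | m'.+1 => castmx (two_pow_double m', two_pow_double m')
               (block_mx (GN m') 0 (GN m') (GN m'))
  end.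

(* C_B(S): the code spanned by the rows of B indexed by S, represented
   (mxalgebra style) by a matrix whose row space is that code. *)
Definition code n k (B : 'M['F_2]_(n, k)) (S : {set 'I_n}) : 'M['F_2]_(n, k) :=
  \matrix_(i < n) (if i \in S then row i B else 0).

Definition bin (m : nat) (i : nat) : {set 'I_m} := [set j : 'I_m | odd (i %/ 2 ^ j)].

(* Monomials x^b in F_2[x_0..x_{m-1}]/(x_j^2-x_j) are identified with their
   support b (a set of variables). ev(x^b): column k is the value at the point
   bin(N-1-k), i.e. 1 iff b is contained in bin(N-1-k). *)
Definition ev (m : nat) (f : {set 'I_m}) : 'rV['F_2]_(2 ^ m) :=
  \row_(k < 2 ^ m) (if f \subset bin m (2 ^ m - 1 - k) then 1 else 0).

Definition monomial_code_mx (m : nat) (I : {set {set 'I_m}})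
  : 'M['F_2]_(#|{: {set 'I_m}}|, 2 ^ m) :=
  \matrix_(r < #|{: {set 'I_m}}|)
     (if enum_val r \in I then ev (enum_val r) else 0).

Definition idxs (m : nat) (f : {set 'I_m}) : seq nat :=
  sort leq [seq val x | x <- enum f].

Definition prec_w (m : nat) (f g : {set 'I_m}) : bool := f \subset g.

Definition prec_sh (m : nat) (f g : {set 'I_m}) : bool :=
  (#|f| == #|g|) && all2 leq (idxs f) (idxs g).

Definition prec (m : nat) (f g : {set 'I_m}) : bool :=
  [exists gs : {set 'I_m}, prec_sh f gs && prec_w gs g].

Definition decreasing (m : nat) (I : {set {set 'I_m}}) : Prop :=
  forall f g, f \in I -> prec g f -> g \in I.

Definition is_decreasing_monomial_code (m r : nat) (C : 'M['F_2]_(r, 2 ^ m)) : Prop :=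
  exists I : {set {set 'I_m}}, decreasing I /\ (C == monomial_code_mx I)%MS.

(* Main.v *)
Require Import Defs.
From HB Require Import structures.
From mathcomp Require Import all_boot all_order all_algebra.
From mathcomp Require Import zify.
Require Import Defs.
Set Implicit Arguments. Unset Strict Implicit. Unset Printing Implicit Defensive.
Import GRing.Theory.

Definition subb (m a b : nat) : bool :=
  all (fun j => odd (a %/ 2 ^ j) ==> odd (b %/ 2 ^ j)) (iota 0 m).

Lemma bitlow (m j c x : nat) : (j < m)%N -> odd ((c * 2 ^ m + x) %/ 2 ^ j) = odd (x %/ 2 ^ j).
Proof.
move=> hj.
have -> : (c * 2 ^ m = (c * 2 ^ (m - j)) * 2 ^ j)%N by rewrite -mulnA -expnD subnK // ltnW.
rewrite divnMDl ?expn_gt0 // oddD oddM oddX.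
have -> : (m - j == 0) = false by apply/eqP; lia.
by rewrite andbF.
Qed.

Lemma bittop (m c x : nat) : (x < 2 ^ m)%N -> odd ((c * 2 ^ m + x) %/ 2 ^ m) = odd c.
Proof. by move=> hx; rewrite divnMDl ?expn_gt0 // divn_small // addn0. Qed.

Lemma subbS (m : nat) (c d : bool) x y : (x < 2 ^ m)%N -> (y < 2 ^ m)%N ->
  subb m.+1 (c * 2 ^ m + x) (d * 2 ^ m + y) = (c ==> d) && subb m x y.
Proof.
move=> hx hy; rewrite /subb; have -> : iota 0 m.+1 = iota 0 m ++ [:: m] by rewrite -addn1 iotaD.
rewrite all_cat /= !bittop // !oddb andbT andbC.
congr andb; apply: eq_in_all => j; rewrite mem_iota add0n => hj.
by rewrite !bitlow.
Qed.

Definition valS (m : nat) (f : {set 'I_m}) : nat := (\sum_(j in f) 2 ^ j)%N.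

Lemma bits_sum m k : (k < 2 ^ m)%N -> (\sum_(j < m) odd (k %/ 2 ^ j) * 2 ^ j)%N = k.
Proof.
elim: m k => [|m IH] k hk.
  by rewrite big_ord0; move: hk; rewrite expn0; case: k.
rewrite big_ord_recl /= expn0 divn1 muln1.
under eq_bigr => j _ do rewrite /bump /= add1n expnS divnMA mulnCA.
rewrite -big_distrr /= IH; last by move: hk; rewrite expnS; lia.
by rewrite divn2 mul2n -{3}(odd_double_half k).
Qed.

Lemma valS_bin m k : (k < 2 ^ m)%N -> valS (bin m k) = k.
Proof.
move=> hk; rewrite /valS -{2}(bits_sum hk) big_mkcond /=.
by apply: eq_bigr => j _; rewrite inE; case: odd; rewrite ?mul1n ?mul0n.
Qed.

Lemma bin_sub m a b : (bin m a \subset bin m b) = subb m a b.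
Proof.
apply/subsetP/allP => [H j | H j].
  rewrite mem_iota add0n => hj; apply/implyP => ha.
  by have := H (Ordinal hj); rewrite !inE; apply.
by rewrite !inE => ha; have := H j; rewrite mem_iota add0n ltn_ord => /(_ isT) /implyP; apply.
Qed.

Lemma GNE m (i k : 'I_(2 ^ m)) :
  GN m i k = if subb m (2 ^ m - 1 - i) (2 ^ m - 1 - k) then 1%R else 0%R.
Proof.
elim: m i k => [|m IH] i k.
  by rewrite /= !ord1 mxE eqxx.
rewrite /= castmxE.
set i' := cast_ord _ i; set k' := cast_ord _ k.
have hi : nat_of_ord i' = nat_of_ord i by []. have hk : nat_of_ord k' = nat_of_ord k by [].
have hn : (0 < 2 ^ m)%N by rewrite expn_gt0.
have e2 : (2 ^ m.+1 = 2 ^ m + 2 ^ m)%N by rewrite expnS; lia.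
have := splitK i'; have := splitK k'.
case: splitP => b hb <-; case: splitP => a ha <-.
- rewrite block_mxEul IH.
  have -> : (2 ^ m.+1 - 1 - i = true * 2 ^ m + (2 ^ m - 1 - a))%N.
    by rewrite -hi ha e2 /=; have := ltn_ord a; lia.
  have -> : (2 ^ m.+1 - 1 - k = true * 2 ^ m + (2 ^ m - 1 - b))%N.
    by rewrite -hk hb e2 /=; have := ltn_ord b; lia.
  by rewrite subbS //; lia.
- rewrite block_mxEdl IH.
  have -> : (2 ^ m.+1 - 1 - i = false * 2 ^ m + (2 ^ m - 1 - a))%N.
    by rewrite -hi ha e2 /=; have := ltn_ord a; lia.
  have -> : (2 ^ m.+1 - 1 - k = true * 2 ^ m + (2 ^ m - 1 - b))%N.
    by rewrite -hk hb e2 /=; have := ltn_ord b; lia.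
  by rewrite subbS //; lia.
- rewrite block_mxEur mxE.
  have -> : (2 ^ m.+1 - 1 - i = true * 2 ^ m + (2 ^ m - 1 - a))%N.
    by rewrite -hi ha e2 /=; have := ltn_ord a; lia.
  have -> : (2 ^ m.+1 - 1 - k = false * 2 ^ m + (2 ^ m - 1 - b))%N.
    by rewrite -hk hb e2 /=; have := ltn_ord b; lia.
  by rewrite subbS //; lia.
- rewrite block_mxEdr IH.
  have -> : (2 ^ m.+1 - 1 - i = false * 2 ^ m + (2 ^ m - 1 - a))%N.
    by rewrite -hi ha e2 /=; have := ltn_ord a; lia.
  have -> : (2 ^ m.+1 - 1 - k = false * 2 ^ m + (2 ^ m - 1 - b))%N.
    by rewrite -hk hb e2 /=; have := ltn_ord b; lia.
  by rewrite subbS //; lia.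
Qed.

Lemma card_sets m : #|{: {set 'I_m}}| = (2 ^ m)%N.
Proof. by rewrite -cardsT -powersetT card_powerset cardsT card_ord. Qed.

Lemma bin_inj m : injective (fun k : 'I_(2 ^ m) => bin m k).
Proof.
move=> a b /= e; apply: val_inj => /=.
by rewrite -(valS_bin (ltn_ord a)) e valS_bin.
Qed.

Lemma bin_onto m (f : {set 'I_m}) : exists k : 'I_(2 ^ m), bin m k = f.
Proof.
have := @inj_card_onto _ _ _ (@bin_inj m).
rewrite card_sets card_ord leqnn => /(_ isT f) /codomP [k ->]; by exists k.
Qed.

Lemma valS_sub m (f g : {set 'I_m}) : f \subset g -> (valS f <= valS g)%N.
Proof.
move/subsetP=> H; rewrite /valS (big_mkcond (mem f)) (big_mkcond (mem g)) /=.
apply: leq_sum => j _; case: ifP => // /H ->; done.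
Qed.

Lemma valS_idxs m (f : {set 'I_m}) : valS f = (\sum_(x <- idxs f) 2 ^ x)%N.
Proof. by rewrite /idxs (perm_big _ (permEl (perm_sort _ _))) big_map big_enum. Qed.

Lemma all2_sum s t : all2 leq s t -> (\sum_(x <- s) 2 ^ x <= \sum_(x <- t) 2 ^ x)%N.
Proof.
elim: s t => [|a s IH] [|b t] //= /andP [hab h].
by rewrite !big_cons leq_add ?IH // leq_pexp2l.
Qed.

Lemma prec_valS m (f g : {set 'I_m}) : prec g f -> (valS g <= valS f)%N.
Proof.
case/existsP => gs /andP [/andP [_ h2] h3].
apply: leq_trans (valS_sub h3).
by rewrite !valS_idxs; apply: all2_sum.
Qed.

Lemma row_GN m (i : 'I_(2 ^ m)) : row i (GN m) = ev (bin m (2 ^ m - 1 - i)).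
Proof. by apply/rowP => k; rewrite !mxE GNE bin_sub. Qed.

Lemma subb_refl m a : subb m a a.
Proof. by apply/allP => j _; apply/implyP. Qed.

Lemma GN_unit m : GN m \in unitmx.
Proof.
rewrite unitmxE det_trig.
  by rewrite big1 ?unitr1 // => i _; rewrite GNE subb_refl.
apply/is_trig_mxP => i k hik; rewrite GNE; case: ifP => // h.
move: h; rewrite -bin_sub => /valS_sub; rewrite !valS_bin; try lia.
have := ltn_ord k; lia.
Qed.
Local Open Scope ring_scope.

Lemma row_code n k (B : 'M['F_2]_(n, k)) S i :
  row i (code B S) = if i \in S then row i B else 0.
Proof. by rewrite rowK. Qed.

Lemma rank_code1 n (S : {set 'I_n}) : \rank (code (1%:M : 'M['F_2]_n) S) = #|S|.
Proof.
have /mxdirectP mxd := @mxdirect_delta 'F_2 _ (mem S) n id (in2W (@inj_id _)).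
rewrite /= in mxd.
have -> : \rank (code (1%:M : 'M['F_2]_n) S) = \rank (\sum_(i in S) <<delta_mx 0 i : 'rV['F_2]_n>>)%MS.
  apply: eqmx_rank; apply/andP; split.
    apply/row_subP => i; rewrite row_code; case: ifP => hi; last exact: sub0mx.
    by apply: (sumsmx_sup i) => //; rewrite genmxE row1.
  apply/sumsmx_subP => i hi; rewrite genmxE -row1.
  by have := row_sub i (code (1%:M : 'M['F_2]_n) S); rewrite row_code hi.
rewrite mxd -sum1_card; apply: eq_bigr => i _; by rewrite mxrank_gen mxrank_delta.
Qed.

Lemma code_mul n k (B : 'M['F_2]_(n, k)) S : code B S = code 1%:M S *m B.
Proof.
apply/row_matrixP => i; rewrite row_mul !row_code.
by case: ifP => _; rewrite ?mul0mx // row1 -rowE.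
Qed.

Lemma card_gt n M : #|[set i : 'I_n | (M < i)%N]| = (n - M.+1)%N.
Proof.
rewrite cardsE -sum1_card -(big_mkord (fun i => M < i)%N (fun=> 1%N)).
elim: n => [|n IH]; first by rewrite big_geq.
rewrite big_mkcond big_nat_recr //= -big_mkcond IH; case: ltnP; lia.
Qed.

Lemma part3 m (A : {set 'I_(2 ^ m)}) (P : 'M['F_2]_(2 ^ m)) (M : nat)
  (HA : forall i : 'I_(2 ^ m), (M < i)%N -> i \in A)
  (HPlow : forall i j : 'I_(2 ^ m), (j < i)%N -> P i j = 0)
  (HPdiag : forall i : 'I_(2 ^ m), P i i = 1) :
  (code (GN m) [set i : 'I_(2 ^ m) | (M < i)%N] <= code (P *m GN m) A)%MS.
Proof.
set C := code (P *m GN m) A.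
suff H : forall d (i : 'I_(2 ^ m)), (2 ^ m - i <= d)%N -> (M < i)%N -> (row i (GN m) <= C)%MS.
  apply/row_subP => i; rewrite row_code inE; case: ifP => hi; last exact: sub0mx.
  exact: (H (2 ^ m - i)%N).
elim=> [|d IH] i hd hi; first by have := ltn_ord i; lia.
have hrow : (row i (P *m GN m) <= C)%MS.
  by have := row_sub i C; rewrite row_code HA.
have e : row i (GN m) = row i (P *m GN m) - \sum_(j | j != i) P i j *: row j (GN m).
  rewrite row_mul mulmx_sum_row (bigD1 i) //= !mxE HPdiag scale1r.
  rewrite [X in _ = _ + X - _](eq_bigr (fun j => P i j *: row j (GN m))); last by move=> j _; rewrite mxE.
  by rewrite addrK.
rewrite e addmx_sub ?eqmx_opp // summx_sub // => j hj.
case: (ltnP j i) => hji; first by rewrite HPlow // scale0r sub0mx.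
have hij : (i < j)%N by rewrite ltn_neqAle hji andbT; apply: contraNneq hj => h; apply/eqP/val_inj.
by apply: scalemx_sub; apply: IH; lia.
Qed.

Lemma part1 m (M : nat) :
  is_decreasing_monomial_code (code (GN m) [set i : 'I_(2 ^ m) | (M < i)%N]).
Proof.
set K := (2 ^ m - 1 - M)%N.
exists [set f : {set 'I_m} | (valS f < K)%N]; split.
  move=> f g; rewrite !inE => hf /prec_valS; lia.
have hN : (0 < 2 ^ m)%N by rewrite expn_gt0.
apply/andP; split; apply/row_subP => i.
  rewrite row_code inE; case: ifP => hi; last exact: sub0mx.
  rewrite row_GN; set f := bin m _.
  have hfI : f \in [set f : {set 'I_m} | (valS f < K)%N].
    rewrite inE /f valS_bin; have := ltn_ord i; rewrite /K; lia.
  have := row_sub (enum_rank f) (monomial_code_mx [set f : {set 'I_m} | (valS f < K)%N]).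
  by rewrite rowK enum_rankK hfI.
rewrite rowK; case: ifP => hI; last exact: sub0mx.
have [k hk] := bin_onto (enum_val i).
move: hI; rewrite inE -hk valS_bin // => hkK.
have hiN : (2 ^ m - 1 - k < 2 ^ m)%N by lia.
have := row_sub (Ordinal hiN) (code (GN m) [set i : 'I_(2 ^ m) | (M < i)%N]).
rewrite row_code inE /=.
have -> : (M < 2 ^ m - 1 - k)%N by move: hkK; rewrite /K; lia.
rewrite row_GN /=.
by have -> : (2 ^ m - 1 - (2 ^ m - 1 - k) = k)%N by have := ltn_ord k; lia.
Qed.

Unset Implicit Arguments.
Theorem proposition1 (m : nat) (Hm : (1 <= m)%N) (A : {set 'I_(2 ^ m)})
  (HA : A != [set: 'I_(2 ^ m)]) (P : 'M['F_2]_(2 ^ m))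
  (HPlow : forall i j : 'I_(2 ^ m), (j < i)%N -> P i j = 0)
  (HPdiag : forall i : 'I_(2 ^ m), P i i = 1) :
  let M := (\max_(i in ~: A) (i : nat))%N in
  let S := [set i : 'I_(2 ^ m) | (M < i)%N] in
  is_decreasing_monomial_code (code (GN m) S)
  /\ \rank (code (GN m) S) = (2 ^ m - 1 - M)%N
  /\ (code (GN m) S <= code (P *m GN m) A)%MS.
Proof.
move=> M S; split; first exact: part1.
split.
  rewrite code_mul mxrankMfree ?row_free_unit ?GN_unit // rank_code1 card_gt; lia.
apply: part3 => // i hi; apply/negPn/negP => hA.
have : (i <= M)%N.
  rewrite /M; have hc : i \in ~: A by rewrite inE.
  exact: (leq_bigmax_cond _ hc).
lia.
Qed.
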